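(* There are infinitely many graphs $G$, each of which is a one-point union of regular graphs, such that $\chi_{la}(G)=2$.
   Context: A one-point union of graphs $H_1,\dots,H_r$ ($r\ge 2$) is the graph obtained from their disjoint union by choosing one vertex in each $H_i$ and identifying these $r$ vertices into a single vertex. For a connected graph $G=(V,E)$ with $q=|E|$, a local antimagic labeling is a bijection $f:E\to\{1,\dots,q\}$ such that adjacent vertices $x,y$ satisfy $f^+(x)\ne f^+(y)$, where $f^+(x)=\sum f(e)$ over edges $e$ incident to $x$; $\chi_{la}(G)$ is the minimum number of distinct values of $f^+$ over all local antimagic labelings of $G$. *)

(* Defs.v *)
From mathcomp Require Import all_boot.
Set Implicit Arguments. Unset Strict Implicit. Unset Printing Implicit Defensive.

Definition simple_graph (n : nat) (e : rel 'I_n) : Prop :=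
  symmetric e /\ irreflexive e.

Definition connected_graph (n : nat) (e : rel 'I_n) : Prop :=
  forall x y : 'I_n, connect e x y.

(* Each undirected edge {x,y} is represented once, as the pair (x,y) with x < y. *)
Definition edges (n : nat) (e : rel 'I_n) : {set 'I_n * 'I_n} :=
  [set p : 'I_n * 'I_n | (p.1 < p.2) && e p.1 p.2].

Definition vsum (n : nat) (e : rel 'I_n) (f : 'I_n * 'I_n -> nat) (x : 'I_n) : nat :=
  \sum_(p in edges e | (p.1 == x) || (p.2 == x)) f p.

(* Local antimagic labeling: f restricted to E is a bijection onto {1,...,|E|}
   (injective with values in {1..|E|}), and adjacent vertices get distinct sums. *)
Definition is_la_labeling (n : nat) (e : rel 'I_n) (f : 'I_n * 'I_n -> nat) : Prop :=
  {in edges e &, injective f} /\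
  (forall p, p \in edges e -> 0 < f p <= #|edges e|) /\
  (forall x y : 'I_n, e x y -> vsum e f x != vsum e f y).

Definition num_vsums (n : nat) (e : rel 'I_n) (f : 'I_n * 'I_n -> nat) : nat :=
  size (undup [seq vsum e f x | x <- enum 'I_n]).

Definition chi_la_eq (n : nat) (e : rel 'I_n) (k : nat) : Prop :=
  (exists f, is_la_labeling e f /\ num_vsums e f = k) /\
  (forall f, is_la_labeling e f -> k <= num_vsums e f).

Definition regular_on (n : nat) (e : rel 'I_n) (S : {set 'I_n}) : Prop :=
  exists d : nat, forall x, x \in S -> #|[set y in S | e x y]| = d.

(* G is a one-point union of r >= 2 regular graphs H_1..H_r: there is a cut vertex c
   (the identified vertex) and a partition of V \ {c} into r nonempty parts V_i
   with no edges between different parts, such that each H_i = G[V_i ∪ {c}] is regular. *)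
Definition one_point_union_of_regular (n : nat) (e : rel 'I_n) : Prop :=
  exists (c : 'I_n) (r : nat) (part : 'I_n -> 'I_r),
    2 <= r /\
    (forall i : 'I_r, exists v, v != c /\ part v = i) /\
    (forall x y, x != c -> y != c -> e x y -> part x = part y) /\
    (forall i : 'I_r, regular_on e (c |: [set v | (v != c) && (part v == i)])).

(* Main.v *)
Require Import Defs.
From mathcomp Require Import all_boot zify.
Set Implicit Arguments. Unset Strict Implicit. Unset Printing Implicit Defensive.


Definition Dl K := 2*K+1.
Definition Wd K := 4*K+1.
Definition nn K := K * Wd K + (2*K - 1).
Definition lenc K j := if j < K then 2 * Dl K else 2*K.
Definition jj K x := (x-1) %/ Wd K.
Definition pp K x := (x-1) %% Wd K + 1.
Definition vtx K j p := 1 + j * Wd K + (p-1).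
Definition nbv (K j i : nat) : nat := if (i == 0) || (i == lenc K j) then 0 else vtx K j i.
Definition label K j i := let h := i./2 in
  if j < K then (if odd i then (2*K - h) * Dl K + 1 + j else h * Dl K + (2*K - j))
  else (if odd i then (K - h) * Dl K else (K+1+h) * Dl K).

Lemma divmod_uniq (W a b c d : nat) : a * W + b = c * W + d -> b < W -> d < W -> a = c /\ b = d.
Proof. move=> E hb hd.
have W0 : 0 < W by lia.
have E1 : (a * W + b) %/ W = a by rewrite divnMDl // divn_small // addn0.
have E2 : (c * W + d) %/ W = c by rewrite divnMDl // divn_small // addn0.
have A : a = c by rewrite -E1 -E2 E.
split=> //. subst. lia. Qed.

Lemma vtx_enc K j p : j <= K -> 1 <= p -> p < lenc K j ->
  [/\ jj K (vtx K j p) = j, pp K (vtx K j p) = p, 1 <= vtx K j p & vtx K j p <= nn K].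
Proof.
move=> hj hp hl.
have hW : p - 1 < Wd K by move: hl; rewrite /lenc /Dl /Wd; case: ifP; lia.
have W0 : 0 < Wd K by rewrite /Wd; lia.
have e1 : vtx K j p - 1 = j * Wd K + (p - 1) by rewrite /vtx; lia.
split.
- by rewrite /jj e1 divnMDl // divn_small // addn0.
- by rewrite /pp e1 modnMDl modn_small //; lia.
- rewrite /vtx; lia.
- rewrite /vtx /nn. move: hl; rewrite /lenc /Dl. case: ifP => hjK hl.
  + have : j * Wd K <= (K - 1) * Wd K by apply: leq_mul => //; lia.
    rewrite mulnBl mul1n /Wd. nia.
  + have -> : j = K by lia. lia.
Qed.

Lemma vtx_dec K x : 1 <= x -> x <= nn K ->
  [/\ jj K x <= K, 1 <= pp K x, pp K x < lenc K (jj K x) & x = vtx K (jj K x) (pp K x)].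
Proof.
move=> h1 h2.
have W0 : 0 < Wd K by rewrite /Wd; lia.
have em := divn_eq (x - 1) (Wd K).
have hm := ltn_pmod (x - 1) W0.
rewrite /jj /pp /vtx.
set a := (x - 1) %/ Wd K in em *. set m := (x - 1) %% Wd K in em hm *.
have haK : a <= K.
  case: (leqP a K) => // hK.
  have : K.+1 * Wd K <= a * Wd K by apply: leq_mul.
  have hWv : Wd K = 4*K+1 by [].
  move: h2; rewrite /nn mulSn. lia.
split=> //; try lia.
rewrite /lenc /Dl. case: ifP => hK.
- move: hm; rewrite /Wd; lia.
- have eK : a = K by lia.
  have hWv : Wd K = 4*K+1 by [].
  move: h2 em; rewrite /nn eK; lia.
Qed.


Lemma label_even K j h : label K j (2*h) = if j < K then h * Dl K + (2*K - j) else (K+1+h) * Dl K.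
Proof. by rewrite mul2n /label odd_double doubleK. Qed.
Lemma label_odd K j h : label K j (2*h+1) = if j < K then (2*K - h) * Dl K + 1 + j else (K - h) * Dl K.
Proof. by rewrite mul2n addn1 /label /= odd_double uphalf_double. Qed.
Lemma odd_e h : odd (2*h) = false. Proof. by rewrite mul2n odd_double. Qed.
Lemma odd_o h : odd (2*h+1) = true. Proof. by rewrite mul2n addn1 /= odd_double. Qed.

Lemma evod i : exists h, i = 2*h \/ i = 2*h+1.
Proof.
elim: i => [|i [h [->|->]]]; first by exists 0; left.
- by exists h; right; lia.
- by exists h.+1; left; lia.
Qed.

Lemma label_sum K j p : 2 <= K -> j <= K -> 1 <= p -> p < lenc K j ->
  label K j (p-1) + label K j p = if odd p then Dl K * Dl K else Dl K * (Dl K + 1).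
Proof.
move=> hK hj hp hl. have [h [Ep|Ep]] := evod p; subst p.
- case: h hp hl => [|g] hp hl; first lia.
  have -> : 2*g.+1 - 1 = 2*g+1 by lia.
  rewrite label_odd label_even odd_e.
  move: hl; rewrite /lenc /Dl. case: ifP => hjK hl.
  + have : g * (2*K+1) <= (2*K) * (2*K+1) by apply: leq_mul; lia.
    rewrite mulnBl. lia.
  + have : g * (2*K+1) <= K * (2*K+1) by apply: leq_mul; lia.
    rewrite mulnBl. lia.
- have -> : 2*h+1-1 = 2*h by lia.
  rewrite label_odd label_even odd_o.
  move: hl; rewrite /lenc /Dl. case: ifP => hjK hl.
  + have : h * (2*K+1) <= (2*K) * (2*K+1) by apply: leq_mul; lia.
    rewrite mulnBl. lia.
  + have : h * (2*K+1) <= K * (2*K+1) by apply: leq_mul; lia.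
    rewrite mulnBl. lia.
Qed.

Lemma label_c K j : 2 <= K -> j <= K ->
  label K j 0 + label K j (lenc K j - 1) = if j < K then Dl K else (K+2) * Dl K.
Proof.
move=> hK hj. rewrite /lenc. case: ifP => hjK.
- have -> : 2 * Dl K - 1 = 2*(2*K)+1 by rewrite /Dl; lia.
  rewrite (label_even K j 0) label_odd hjK /Dl subnn. lia.
- have -> : 2 * K - 1 = 2*(K.-1)+1 by lia.
  rewrite (label_even K j 0) label_odd hjK /Dl.
  have -> : K - K.-1 = 1 by lia. lia.
Qed.

Lemma label_range K j i : 2 <= K -> j <= K -> i < lenc K j ->
  0 < label K j i <= Dl K * Dl K - 1.
Proof.
move=> hK hj hl. have [h [Ei|Ei]] := evod i; subst i.
- rewrite label_even; move: hl; rewrite /lenc /Dl; case: ifP => hjK hl.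
  + have : h * (2*K+1) <= (2*K) * (2*K+1) by apply: leq_mul; lia.
    lia.
  + have : (K+1+h) * (2*K+1) <= (2*K) * (2*K+1) by apply: leq_mul; lia.
    lia.
- rewrite label_odd; move: hl; rewrite /lenc /Dl; case: ifP => hjK hl.
  + have : h * (2*K+1) <= (2*K) * (2*K+1) by apply: leq_mul; lia.
    rewrite mulnBl. lia.
  + have : h.+1 * (2*K+1) <= K * (2*K+1) by apply: leq_mul; lia.
    rewrite mulnBl mulSn. lia.
Qed.

Definition lq K j i := let h := i./2 in if j < K then (if odd i then 2*K - h else h) else (if odd i then K - h else K+1+h).
Definition lr K j i := if j < K then (if odd i then 1 + j else 2*K - j) else 0.

Lemma label_inj K j i j' i' : 2 <= K -> j <= K -> i < lenc K j -> j' <= K -> i' < lenc K j' ->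
  label K j i = label K j' i' -> j = j' /\ i = i'.
Proof.
move=> hK hj hl hj' hl'.
have qr : forall j i, j <= K -> i < lenc K j -> label K j i = lq K j i * Dl K + lr K j i /\ lr K j i < Dl K.
  move=> a b ha hb. rewrite /label /lq /lr /Dl. case: ifP => hab; case: (odd b); split; lia.
have [e1 r1] := qr j i hj hl. have [e2 r2] := qr j' i' hj' hl'.
rewrite e1 e2 => /divmod_uniq => /(_ r1 r2) [].
have [h [Ei|Ei]] := evod i; have [h' [Ei'|Ei']] := evod i'; subst i i';
move: hl hl'; rewrite /lq /lr /lenc /Dl ?odd_e ?odd_o ?mul2n ?addn1 ?doubleK ?uphalf_double /=;
case: ifP => ha; case: ifP => hb; lia.
Qed.

Lemma label_surj K L : 2 <= K -> 1 <= L <= Dl K * Dl K - 1 ->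
  exists j i, [/\ j <= K, i < lenc K j & label K j i = L].
Proof.
move=> hK hL.
have D0 : 0 < Dl K by rewrite /Dl; lia.
have em := divn_eq L (Dl K). have hm := ltn_pmod L D0.
set u := L %/ Dl K in em *. set r := L %% Dl K in em hm *.
have hu : u <= 2 * K.
  case: (leqP u (2*K)) => // hu.
  have : (2*K).+1 * Dl K <= u * Dl K by apply: leq_mul.
  move: hL; rewrite em /Dl; nia.
case: (posnP r) => r0.
- case: (leqP u K) => huK.
  + exists K, (2*(K - u)+1). rewrite label_odd ltnn /lenc ltnn. split => //.
    * have : 0 < u. case: (posnP u) => // u0. move: hL. rewrite em u0 r0. lia.
      lia.
    * rewrite em r0. have -> : K - (K - u) = u. 
        have : 0 < u. case: (posnP u) => // u0. move: hL. rewrite em u0 r0. lia.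
        lia.
      lia.
  + exists K, (2*(u - K.+1)). rewrite label_even ltnn /lenc ltnn. split => //.
    * lia.
    * rewrite em r0. have -> : K + 1 + (u - K.+1) = u by lia. lia.
- have hD : Dl K = 2*K+1 by [].
  case: (leqP r K) => hrK.
  + exists (r - 1), (2*(2*K - u)+1). rewrite label_odd /lenc.
    have -> : r - 1 < K by lia. split; [lia | lia |].
    have -> : 2 * K - (2 * K - u) = u by lia. lia.
  + exists (2*K - r), (2*u). rewrite label_even /lenc.
    have hr2 : r <= 2 * K by lia.
    have -> : 2*K - r < K by lia. split; [lia | lia |].
    lia.
Qed.


Definition eN (K x y : nat) : bool :=
  if x == 0 then (y != 0) && ((pp K y == 1) || (pp K y == lenc K (jj K y) - 1))
  else if y == 0 then (pp K x == 1) || (pp K x == lenc K (jj K x) - 1)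
  else (jj K x == jj K y) && ((pp K y == (pp K x).+1) || (pp K x == (pp K y).+1)).

Definition cl (K y : nat) : nat := if pp K y == 1 then label K (jj K y) 0 else label K (jj K y) (lenc K (jj K y) - 1).
Definition wN (K x y : nat) : nat := if x == 0 then cl K y else if y == 0 then cl K x
  else label K (jj K x) (minn (pp K x) (pp K y)).

Lemma lenc_ge K j : 2 <= K -> 4 <= lenc K j.
Proof. rewrite /lenc /Dl; case: ifP; lia. Qed.

Lemma vtx_eq K y j p : 1 <= y -> y <= nn K -> j <= K -> 1 <= p -> p < lenc K j ->
  (y == vtx K j p) = (jj K y == j) && (pp K y == p).
Proof.
move=> h1 h2 hj hp hl. apply/eqP/andP.
- move=> ->. by have [-> -> _ _] := vtx_enc hj hp hl.
- case=> /eqP e1 /eqP e2. have [_ _ _ ->] := vtx_dec h1 h2. by rewrite e1 e2.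
Qed.

Lemma nbv_val K j i : j <= K -> i <= lenc K j ->
  (i == 0) || (i == lenc K j) /\ nbv K j i = 0 \/
  [/\ 1 <= i, i < lenc K j & nbv K j i = vtx K j i].
Proof.
move=> hj hi. rewrite /nbv. case: ifP => h.
- by left.
- right. split => //; lia.
Qed.

Lemma NB K x y : 2 <= K -> 1 <= x -> x <= nn K -> y <= nn K ->
  eN K x y = (y == nbv K (jj K x) (pp K x - 1)) || (y == nbv K (jj K x) (pp K x).+1).
Proof.
move=> hK h1 h2 hy.
have [hj hp hl ex] := vtx_dec h1 h2.
set j := jj K x in hj hl ex *. set p := pp K x in hp hl ex *.
have hL := lenc_ge j hK.
rewrite /eN -/j -/p. have -> : (x == 0) = false by lia.
have E1 : (y == nbv K j (p-1)) = if p == 1 then y == 0 else (y == vtx K j (p-1)).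
  rewrite /nbv. have -> : ((p-1 == 0) || (p-1 == lenc K j)) = (p == 1) by lia. by case: (p == 1).
have E2 : (y == nbv K j p.+1) = if p.+1 == lenc K j then y == 0 else (y == vtx K j p.+1).
  rewrite /nbv. have -> : ((p.+1 == 0) || (p.+1 == lenc K j)) = (p.+1 == lenc K j) by lia. by case: (p.+1 == lenc K j).
rewrite E1 E2.
case: (posnP y) => y0.
- rewrite y0 /=. case: ifP => hp1; case: ifP => hp2; rewrite /vtx; lia.
- have y1 : 1 <= y by lia.
  have [hjy hpy hly ey] := vtx_dec y1 hy.
  case: ifP => hp1; case: ifP => hp2; rewrite ?vtx_eq //; try lia.
  all: case: (eqVneq (jj K y) j) => ej; rewrite ?ej in hly *; lia.
Qed.


Lemma vsum_nb n (e : rel 'I_n) (w : 'I_n -> 'I_n -> nat) (x : 'I_n) :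
  symmetric e -> irreflexive e -> (forall a b, e a b -> w a b = w b a) ->
  vsum e (fun p => w p.1 p.2) x = \sum_(y | e x y) w x y.
Proof.
move=> sym irr ws. rewrite /vsum.
pose h (y : 'I_n) := if x < y then (x, y) else (y, x).
have hinj : {in [pred y | e x y] &, injective h}.
  move=> y y' _ _. rewrite /h.
  case: ltngtP => hy; case: ltngtP => hy' [] *; apply: val_inj => /=; subst; lia.
have E : \sum_(y | e x y) w x y = \sum_(y in [pred y | e x y]) (fun p => w p.1 p.2) (h y).
  apply: eq_bigr => y exy. rewrite /h. case: ifP => _ //=. by rewrite ws // sym.
rewrite E -(big_imset (fun p : 'I_n * 'I_n => w p.1 p.2) hinj) /=.
apply: eq_bigl.
move=> p. apply/idP/idP.
+ case/andP. rewrite /edges inE => /andP [lt ep] /orP [] /eqP ex.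
  * apply/imsetP. exists p.2; first by rewrite inE -ex.
    rewrite /h -ex lt. by case: p {ex lt ep}.
  * apply/imsetP. exists p.1; first by rewrite inE -ex sym.
    rewrite /h -ex ltnNge (ltnW lt) /=. by case: p {ex lt ep}.
+ case/imsetP => y; rewrite inE => exy ->. rewrite /h /edges inE.
  case: (ltngtP x y) => hxy /=.
  * by rewrite hxy exy eqxx.
  * by rewrite hxy sym exy eqxx orbT.
  * have : x = y by apply: val_inj. move=> E'. by rewrite E' irr in exy.
Qed.

Lemma sum_pred2 (I : finType) (P : pred I) (F : I -> nat) a b :
  a != b -> (forall y, P y = (y == a) || (y == b)) -> \sum_(y | P y) F y = F a + F b.
Proof.
move=> ab HP. rewrite (bigD1 a) /=; last by rewrite HP eqxx.
congr (_ + _). apply: big_pred1 => y /=. rewrite HP.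
case: (eqVneq y a) => [->|ya] /=; last by rewrite andbT.
by rewrite (negbTE ab).
Qed.


Lemma eN_sym (K x y : nat) : eN K x y = eN K y x.
Proof. rewrite /eN. case: (posnP x) => hx; case: (posnP y) => hy; subst => //=; lia. Qed.

Lemma eN_irr (K x : nat) : eN K x x = false.
Proof. rewrite /eN. case: (posnP x) => hx; subst => //=; lia. Qed.

Lemma wN_sym (K x y : nat) : eN K x y -> wN K x y = wN K y x.
Proof.
rewrite /eN /wN. case: (posnP x) => hx; case: (posnP y) => hy; subst => //=.
case/andP => /eqP -> _. by rewrite minnC.
Qed.

Lemma wN_nb (K x : nat) : 2 <= K -> 1 <= x -> x <= nn K ->
  wN K x (nbv K (jj K x) (pp K x - 1)) = label K (jj K x) (pp K x - 1) /\
  wN K x (nbv K (jj K x) (pp K x).+1) = label K (jj K x) (pp K x).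
Proof.
move=> hK h1 h2.
have [hj hp hl ex] := vtx_dec h1 h2.
have hL := lenc_ge (jj K x) hK.
rewrite /wN. have -> : (x == 0) = false by lia.
split.
- rewrite /nbv. have [hc|hc] := boolP ((pp K x - 1 == 0) || (pp K x - 1 == lenc K (jj K x))).
  + rewrite /= /cl. have -> : pp K x = 1 by lia. by [].
  + 
    have a1 : 1 <= pp K x - 1 by lia. have a2 : pp K x - 1 < lenc K (jj K x) by lia. have [e1 e2 e3 e4] := vtx_enc hj a1 a2.
    have -> : (vtx K (jj K x) (pp K x - 1) == 0) = false by rewrite /vtx; lia.
    rewrite e2. congr label. lia.
- rewrite /nbv. have [hc|hc] := boolP (((pp K x).+1 == 0) || ((pp K x).+1 == lenc K (jj K x))).
  + rewrite /= /cl. have -> : (pp K x == 1) = false by lia.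
    congr label. lia.
  + 
    have a1 : 1 <= (pp K x).+1 by lia. have a2 : (pp K x).+1 < lenc K (jj K x) by lia. have [e1 e2 e3 e4] := vtx_enc hj a1 a2.
    have -> : (vtx K (jj K x) (pp K x).+1 == 0) = false by rewrite /vtx; lia.
    rewrite e2. congr label. lia.
Qed.

Lemma nb_neq (K x : nat) : 2 <= K -> 1 <= x -> x <= nn K ->
  nbv K (jj K x) (pp K x - 1) != nbv K (jj K x) (pp K x).+1.
Proof.
move=> hK h1 h2.
have [hj hp hl ex] := vtx_dec h1 h2.
have hL := lenc_ge (jj K x) hK.
rewrite /nbv /vtx. case: ifP => hc; case: ifP => hc'; lia.
Qed.

Lemma nbv_le (K j i : nat) : j <= K -> i <= lenc K j -> nbv K j i <= nn K.
Proof.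
move=> hj hi. rewrite /nbv. case: ifP => hc //.
have a1 : 1 <= i by lia. have a2 : i < lenc K j by lia. by have [_ _ _ ->] := vtx_enc hj a1 a2.
Qed.

Lemma EI (K x y : nat) : 2 <= K -> x < y -> y <= nn K -> eN K x y ->
  exists j i, [/\ j <= K, i < lenc K j, wN K x y = label K j i,
     x = minn (nbv K j i) (nbv K j i.+1) & y = maxn (nbv K j i) (nbv K j i.+1)].
Proof.
move=> hK hxy hy exy.
have y1 : 1 <= y by lia.
have [hj hp hl ey] := vtx_dec y1 hy.
have hL := lenc_ge (jj K y) hK.
case: (posnP x) => [x0|x1].
- subst x. move: exy. rewrite /eN /= => /andP [_ hpy].
  case: (eqVneq (pp K y) 1) => hp1.
  + exists (jj K y), 0. split => //; first lia.
    * by rewrite /wN /= /cl hp1 eqxx.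
    * rewrite /nbv /=. have -> : (1 == lenc K (jj K y)) = false by lia. lia.
    * rewrite /nbv /=. have -> : (1 == lenc K (jj K y)) = false by lia. rewrite -{1}hp1 -ey. lia.
  + have hpl : pp K y = lenc K (jj K y) - 1 by lia.
    exists (jj K y), (lenc K (jj K y) - 1). split => //; first lia.
    * by rewrite /wN /= /cl (negbTE hp1).
    * rewrite /nbv. have -> : (lenc K (jj K y) - 1).+1 = lenc K (jj K y) by lia.
      rewrite eqxx orbT. case: ifP => _; lia.
    * rewrite /nbv. have -> : (lenc K (jj K y) - 1).+1 = lenc K (jj K y) by lia.
      rewrite eqxx orbT. have -> : ((lenc K (jj K y) - 1 == 0) || (lenc K (jj K y) - 1 == lenc K (jj K y))) = false by lia.
      rewrite -hpl -ey. lia.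
- have hx : x <= nn K by lia.
  have [hjx hpx hlx ex] := vtx_dec x1 hx.
  have [w1 w2] := wN_nb hK x1 hx.
  move: exy. rewrite NB // => /orP [] /eqP E.
  + exists (jj K x), (pp K x - 1). split => //; first lia.
    * by rewrite E w1.
    * have -> : (pp K x - 1).+1 = pp K x by lia.
      rewrite {2}/nbv. have -> : ((pp K x == 0) || (pp K x == lenc K (jj K x))) = false by lia.
      rewrite -ex -E. lia.
    * have -> : (pp K x - 1).+1 = pp K x by lia.
      rewrite {2}/nbv. have -> : ((pp K x == 0) || (pp K x == lenc K (jj K x))) = false by lia.
      rewrite -ex -E. lia.
  + exists (jj K x), (pp K x). split => //.
    * by rewrite E w2.
    * rewrite {1}/nbv. have -> : ((pp K x == 0) || (pp K x == lenc K (jj K x))) = false by lia.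
      rewrite -ex -E. lia.
    * rewrite {1}/nbv. have -> : ((pp K x == 0) || (pp K x == lenc K (jj K x))) = false by lia.
      rewrite -ex -E. lia.
Qed.

Lemma EE (K j i : nat) : 2 <= K -> j <= K -> i < lenc K j ->
  [/\ nbv K j i <= nn K, nbv K j i.+1 <= nn K, eN K (nbv K j i) (nbv K j i.+1)
    & wN K (nbv K j i) (nbv K j i.+1) = label K j i].
Proof.
move=> hK hj hi.
have hL := lenc_ge j hK.
have n1 := nbv_le hj (ltnW hi). have n2 := nbv_le hj hi.
split => //.
- case: (posnP i) => [i0|i1].
  + subst i. rewrite /nbv /=. have -> : (1 == lenc K j) = false by lia.
    have a1 : 1 <= 1 by lia. have a2 : 1 < lenc K j by lia. have [e1 e2 e3 e4] := vtx_enc hj a1 a2.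
    rewrite /eN /= e2 eqxx /=. lia.
  + have [e1 e2 e3 e4] := vtx_enc hj i1 hi.
    have -> : nbv K j i = vtx K j i by rewrite /nbv; case: ifP => //; lia.
    rewrite NB //. by rewrite e1 e2 eqxx orbT.
- case: (posnP i) => [i0|i1].
  + subst i. rewrite /nbv /=. have -> : (1 == lenc K j) = false by lia.
    have a1 : 1 <= 1 by lia. have a2 : 1 < lenc K j by lia. have [e1 e2 e3 e4] := vtx_enc hj a1 a2.
    rewrite /wN /= /cl e1 e2 /=. by [].
  + have [e1 e2 e3 e4] := vtx_enc hj i1 hi.
    have -> : nbv K j i = vtx K j i by rewrite /nbv; case: ifP => //; lia.
    have [_ w2] := wN_nb hK e3 e4. by rewrite e1 e2 in w2.
Qed.


Definition nV K := (nn K).+1.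
Definition eG K : rel 'I_(nV K) := fun x y => eN K x y.
Definition fG K : 'I_(nV K) * 'I_(nV K) -> nat := fun p => wN K p.1 p.2.
Arguments eG : clear implicits.
Arguments fG : clear implicits.
Definition svl K (x : nat) := if x == 0 then Dl K * (Dl K + 1)
  else if odd (pp K x) then Dl K * Dl K else Dl K * (Dl K + 1).

Lemma eq_inord (K : nat) (y : 'I_(nV K)) v : v <= nn K -> (y == inord v) = ((y : nat) == v).
Proof. move=> hv. by rewrite -val_eqE /= inordK. Qed.

Lemma eq_inordK (K : nat) (j : 'I_K.+1) v : v <= K -> ((inord v : 'I_K.+1) == j) = (v == val j).
Proof. move=> hv. by rewrite -val_eqE /= inordK. Qed.

Lemma eG_sym (K : nat) : symmetric (eG K).
Proof. move=> x y. exact: eN_sym. Qed.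
Lemma eG_irr (K : nat) : irreflexive (eG K).
Proof. move=> x. exact: eN_irr. Qed.

Lemma vsum_eq (K : nat) (x : 'I_(nV K)) : vsum (eG K) (fG K) x = \sum_(y | eG K x y) wN K x y.
Proof.
apply: (vsum_nb (w := fun a b : 'I_(nV K) => wN K a b)) => //.
- exact: eG_sym.
- exact: eG_irr.
- move=> a b. exact: wN_sym.
Qed.

Lemma Pc (K : nat) (j : 'I_K.+1) (y : 'I_(nV K)) : 2 <= K ->
  eN K 0 y && ((inord (jj K y) : 'I_K.+1) == j) =
  ((y : nat) == vtx K j 1) || ((y : nat) == vtx K j (lenc K j - 1)).
Proof.
move=> hK. have hj : (j : nat) <= K by have := ltn_ord j; lia.
have hL := lenc_ge j hK.
have hy : (y : nat) <= nn K by have := ltn_ord y; rewrite /nV; lia.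
case: (posnP ((y : nat))) => y0.
- rewrite y0 /eN /= /vtx. lia.
- rewrite (@vtx_eq K y j 1) //; last lia.
  rewrite (@vtx_eq K y j (lenc K j - 1)) //; try lia.
  have [hjy hpy hly ey] := vtx_dec y0 hy.
  rewrite eq_inordK // /eN. have -> : ((y : nat) == 0) = false by lia.
  case: (eqVneq (jj K y) j) => ej /=; rewrite ?ej in hly *; lia.
Qed.

Lemma vsumG (K : nat) (x : 'I_(nV K)) : 2 <= K -> vsum (eG K) (fG K) x = svl K x.
Proof.
move=> hK. rewrite vsum_eq /svl.
have hx : (x : nat) <= nn K by have := ltn_ord x; rewrite /nV; lia.
case: (posnP ((x : nat))) => x0.
- rewrite x0 /=.
  rewrite (partition_big (fun y : 'I_(nV K) => (inord (jj K y) : 'I_K.+1)) predT) //=.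
  rewrite (eq_bigr (fun j : 'I_K.+1 => if (j : nat) < K then Dl K else (K+2) * Dl K)); last first.
    move=> j _. have hj : (j : nat) <= K by have := ltn_ord j; lia.
    have hL := lenc_ge j hK.
    have a1 : 1 <= 1 by []. have a2 : 1 < lenc K j by lia.
    have [e1 e2 e3 e4] := vtx_enc hj a1 a2.
    have b1 : 1 <= lenc K j - 1 by lia. have b2 : lenc K j - 1 < lenc K j by lia.
    have [f1 f2 f3 f4] := vtx_enc hj b1 b2.
    rewrite (@sum_pred2 _ _ _ (inord (vtx K j 1)) (inord (vtx K j (lenc K j - 1)))).
    + rewrite !inordK; try lia. rewrite /wN /= /cl e1 e2 f1 f2 /=.
      have -> : (lenc K j - 1 == 1) = false by lia.
      by rewrite label_c.
    + rewrite -val_eqE /= !inordK; try lia. rewrite /vtx; lia.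
    + move=> y. rewrite !eq_inord //. rewrite -(Pc j y hK). by rewrite /eG x0.
  rewrite big_ord_recr /= ltnn.
  rewrite (eq_bigr (fun _ => Dl K)); last by move=> j _; rewrite /= ltn_ord.
  rewrite big_const_ord iter_addn_0 /Dl. lia.
- have x1 : (x : nat) == 0 = false by lia.
  have [hj hp hl ex] := vtx_dec x0 hx.
  have [w1 w2] := wN_nb hK x0 hx.
  have n1 := nbv_le hj (_ : pp K x - 1 <= lenc K (jj K x)).
  have n2 := nbv_le hj (_ : (pp K x).+1 <= lenc K (jj K x)).
  rewrite (@sum_pred2 _ _ _ (inord (nbv K (jj K x) (pp K x - 1))) (inord (nbv K (jj K x) (pp K x).+1))).
  + rewrite !inordK; try (apply: n1 || apply: n2; lia).
    rewrite w1 w2 label_sum //.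
  + rewrite -val_eqE /= !inordK; try (apply: n1 || apply: n2; lia).
    exact: nb_neq.
  + move=> y. rewrite !eq_inord; try (apply: n1 || apply: n2; lia).
    rewrite /eG NB //. by have := ltn_ord y; rewrite /nV; lia.
Qed.


Lemma ord_le (K : nat) (x : 'I_(nV K)) : (x : nat) <= nn K.
Proof. by have := ltn_ord x; rewrite /nV; lia. Qed.

Lemma edge_info (K : nat) (p : 'I_(nV K) * 'I_(nV K)) : 2 <= K -> p \in edges (eG K) ->
  exists j i, [/\ j <= K, i < lenc K j, fG K p = label K j i,
     (p.1 : nat) = minn (nbv K j i) (nbv K j i.+1) & (p.2 : nat) = maxn (nbv K j i) (nbv K j i.+1)].
Proof.
move=> hK. rewrite /edges inE => /andP [lt ep].
exact: (EI hK lt (ord_le p.2) ep).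
Qed.

Lemma fG_inj (K : nat) : 2 <= K -> {in edges (eG K) &, injective (fG K)}.
Proof.
move=> hK p p' hp hp' E.
have [j [i [hj hi f1 a1 b1]]] := edge_info hK hp.
have [j' [i' [hj' hi' f2 a2 b2]]] := edge_info hK hp'.
rewrite f1 f2 in E. have [ej ei] := label_inj hK hj hi hj' hi' E. subst j' i'.
case: p p' a1 b1 a2 b2 {hp hp' f1 f2 E} => [x y] [x' y'] /= a1 b1 a2 b2.
congr pair; apply: val_inj => /=; lia.
Qed.

Definition qq K := Dl K * Dl K - 1.

Lemma card_edges (K : nat) : 2 <= K -> #|edges (eG K)| = qq K.
Proof.
move=> hK.
set s := [seq fG K p | p <- enum (edges (eG K))].
have us : uniq s.
  rewrite map_inj_in_uniq ?enum_uniq //.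
  move=> p p'; rewrite !mem_enum. exact: fG_inj.
have sz : size s = #|edges (eG K)| by rewrite size_map -cardE.
apply/eqP; rewrite eqn_leq; apply/andP; split.
- rewrite -sz -(size_iota 1 (qq K)). apply: uniq_leq_size => // L.
  case/mapP => p; rewrite mem_enum => hp ->.
  have [j [i [hj hi f1 _ _]]] := edge_info hK hp.
  rewrite mem_iota f1. have := label_range hK hj hi. rewrite /qq; clear; lia.
- rewrite -sz -(size_iota 1 (qq K)). apply: uniq_leq_size; first exact: iota_uniq.
  move=> L; rewrite mem_iota => hL.
  have hL' : 1 <= L <= Dl K * Dl K - 1 by move: hL; rewrite /qq; lia.
  have [j [i [hj hi hl]]] := label_surj hK hL'.
  have [n1 n2 e w] := EE hK hj hi.
  set a := nbv K j i in n1 n2 e w. set b := nbv K j i.+1 in n1 n2 e w.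
  have ab : a != b by apply/eqP => E; rewrite E eN_irr in e.
  have m1 : minn a b < nV K by move: n1 n2; rewrite /nV; clear; lia.
  have m2 : maxn a b < nV K by move: n1 n2; rewrite /nV; clear; lia.
  apply/mapP. exists (inord (minn a b), inord (maxn a b)).
  + rewrite mem_enum /edges inE /=. rewrite /eG (inordK m1) (inordK m2).
    apply/andP; split; first by move: ab; clear; lia.
    case: (leqP a b) => h.
    * exact e.
    * rewrite eN_sym; exact e.
  + rewrite /fG /= (inordK m1) (inordK m2).
    case: (leqP a b) => h.
    * rewrite w; exact (esym hl).
    * rewrite -wN_sym; [rewrite w; exact (esym hl) | exact e].
Qed.


Lemma odd_len (K j : nat) : 2 <= K -> odd (lenc K j - 1).
Proof.
move=> hK. rewrite /lenc /Dl. case: ifP => _.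
- have -> : 2 * (2 * K + 1) - 1 = 2 * (2*K) + 1 by lia. exact: odd_o.
- have -> : 2 * K - 1 = 2 * (K.-1) + 1 by lia. exact: odd_o.
Qed.

Lemma sval_adj (K x y : nat) : 2 <= K -> eN K x y -> svl K x != svl K y.
Proof.
move=> hK. rewrite /eN /svl.
have AB : Dl K * (Dl K + 1) != Dl K * Dl K by rewrite /Dl; lia.
case: (posnP x) => hx; case: (posnP y) => hy; subst => //=.
- case/orP => /eqP ->.
  + rewrite /=; exact AB.
  + rewrite odd_len //; exact AB.
- case/orP => /eqP ->.
  + rewrite /= eq_sym; exact AB.
  + rewrite odd_len // eq_sym; exact AB.
- case/andP => _ /orP [] /eqP ->.
  + rewrite /=. case: (odd (pp K x)) => /=; [rewrite eq_sym|]; exact AB.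
  + rewrite /=. case: (odd (pp K y)) => /=; [|rewrite eq_sym]; exact AB.
Qed.

Lemma la_lab (K : nat) : 2 <= K -> is_la_labeling (eG K) (fG K).
Proof.
move=> hK. split; [exact: fG_inj | split].
- move=> p hp. have [j [i [hj hi f1 _ _]]] := edge_info hK hp.
  rewrite f1 card_edges // /qq. exact: label_range.
- move=> x y exy. rewrite !vsumG //. exact: sval_adj.
Qed.

Lemma one_nn (K : nat) : 2 <= K -> 1 <= nn K.
Proof. move=> hK. rewrite /nn /Wd. nia. Qed.

Lemma adj01 (K : nat) : 2 <= K -> eG K ord0 (inord 1).
Proof.
move=> hK. rewrite /eG /= inordK; last by have := one_nn hK; lia.
rewrite /eN /= /pp modn_small //. rewrite /Wd; lia.
Qed.

Lemma num2 (K : nat) : 2 <= K -> num_vsums (eG K) (fG K) = 2.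
Proof.
move=> hK. rewrite /num_vsums.
set s := [seq vsum (eG K) (fG K) x | x <- enum 'I_(nV K)].
have AB : Dl K * (Dl K + 1) != Dl K * Dl K by rewrite /Dl; lia.
have -> : size (undup s) = size [:: Dl K * (Dl K + 1); Dl K * Dl K].
  apply: perm_size. apply: uniq_perm; first exact: undup_uniq.
  - by rewrite /= inE AB.
  - move=> L. rewrite mem_undup !inE. apply/mapP/idP.
    + case=> x _ ->. rewrite vsumG // /svl. case: ifP => _; first by rewrite eqxx.
      by case: ifP => _; rewrite eqxx ?orbT.
    + case/orP => /eqP ->.
      * exists ord0; first by rewrite mem_enum. by rewrite vsumG.
      * exists (inord 1); first by rewrite mem_enum.
        rewrite vsumG // /svl inordK; last by have := one_nn hK; lia.
        rewrite /= /pp modn_small //. rewrite /Wd; lia.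
by [].
Qed.

Lemma lower2 (K : nat) f : 2 <= K -> is_la_labeling (eG K) f -> 2 <= num_vsums (eG K) f.
Proof.
move=> hK [_ [_ hadj]]. rewrite /num_vsums.
have := hadj _ _ (adj01 hK).
set a := vsum _ _ ord0. set b := vsum _ _ (inord 1) => ab.
have -> : 2 = size [:: a; b] by [].
apply: uniq_leq_size; first by rewrite /= inE ab.
move=> L; rewrite !inE mem_undup => /orP [] /eqP ->; apply/mapP.
- by exists ord0; rewrite ?mem_enum.
- by exists (inord 1); rewrite ?mem_enum.
Qed.


Definition partG (K : nat) (v : 'I_(nV K)) : 'I_K.+1 := inord (jj K v).

Lemma card_set2 (T : finType) (A : {set T}) a b : a != b -> (forall y, (y \in A) = (y == a) || (y == b)) -> #|A| = 2.
Proof.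
move=> ab HA. have -> : A = [set a; b] by apply/setP => y; rewrite HA !inE.
by rewrite cards2 ab.
Qed.

Lemma opu (K : nat) : 2 <= K -> one_point_union_of_regular (eG K).
Proof.
move=> hK. exists ord0, K.+1, (@partG K). split; first lia. split; [|split].
- move=> i. have hi : (i : nat) <= K by have := ltn_ord i; lia.
  have hL := lenc_ge i hK.
  have a1 : 1 <= 1 by []. have a2 : 1 < lenc K i by lia.
  have [e1 e2 e3 e4] := vtx_enc hi a1 a2.
  have m : vtx K i 1 < nV K by rewrite /nV; lia.
  exists (inord (vtx K i 1)). split.
  + rewrite -val_eqE /= (inordK m). lia.
  + apply: val_inj. rewrite /partG /= (inordK m) e1 inordK //.
- move=> x y hx hy. rewrite /eG /eN.
  have -> : ((x : nat) == 0) = false by move: hx; rewrite -val_eqE /=; lia.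
  have -> : ((y : nat) == 0) = false by move: hy; rewrite -val_eqE /=; lia.
  case/andP => /eqP E _. by rewrite /partG E.
- move=> i. exists 2 => x. rewrite !inE.
  have hi : (i : nat) <= K by have := ltn_ord i; lia.
  have hL := lenc_ge i hK.
  case: (eqVneq x ord0) => [->|hx] /=.
  + move=> _.
    have a1 : 1 <= 1 by []. have a2 : 1 < lenc K i by lia.
    have [e1 e2 e3 e4] := vtx_enc hi a1 a2.
    have b1 : 1 <= lenc K i - 1 by lia. have b2 : lenc K i - 1 < lenc K i by lia.
    have [f1 f2 f3 f4] := vtx_enc hi b1 b2.
    apply: (@card_set2 _ _ (inord (vtx K i 1)) (inord (vtx K i (lenc K i - 1)))).
    * rewrite -val_eqE /= !inordK; try lia. rewrite /vtx; lia.
    * move=> y. rewrite !inE !eq_inord //. rewrite -(Pc i y hK).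
      rewrite /partG /eG /=.
      case: (eqVneq y ord0) => [->|hy] /=.
      -- exact: eN_irr.
      -- by rewrite andbC.
  + move=> /eqP hpx.
    have hx0 : 1 <= (x : nat) by move: hx; rewrite -val_eqE /=; lia.
    have hxn := ord_le x.
    have [hj hp hl ex] := vtx_dec hx0 hxn.
    have n1 : nbv K (jj K x) (pp K x - 1) <= nn K by apply: nbv_le; lia.
    have n2 : nbv K (jj K x) (pp K x).+1 <= nn K by apply: nbv_le; lia.
    apply: (@card_set2 _ _ (inord (nbv K (jj K x) (pp K x - 1))) (inord (nbv K (jj K x) (pp K x).+1))).
    * rewrite -val_eqE /= !inordK; try lia. exact: nb_neq.
    * move=> y. rewrite !inE !eq_inord //.
      rewrite /eG -NB //; last exact: ord_le.
      case: (eqVneq y ord0) => [->|hy] /=; first by [].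
      case E: (eN K x y); last by rewrite andbF.
      rewrite andbT. apply/eqP. rewrite -hpx /partG. congr inord.
      move: E. rewrite /eN.
      have -> : ((x : nat) == 0) = false by lia.
      have -> : ((y : nat) == 0) = false by move: hy; rewrite -val_eqE /=; lia.
      by case/andP => /eqP.
Qed.

Lemma conn_c (K : nat) (y : 'I_(nV K)) : 2 <= K -> connect (eG K) ord0 y.
Proof.
move=> hK.
case: (posnP (y : nat)) => y0.
- have -> : y = ord0 by apply: val_inj. exact: connect0.
- have [hj hp hl ey] := vtx_dec y0 (ord_le y).
  have m : vtx K (jj K y) (pp K y) < nV K. rewrite -ey. exact: ltn_ord.
  have -> : y = inord (vtx K (jj K y) (pp K y)).
    apply: val_inj. by rewrite /= (inordK m) -ey.
  move: hp hl. set j := jj K y. elim: (pp K y) => [|p IH] hp hl; first lia.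
  have hL := lenc_ge j hK.
  have a2 : p.+1 < lenc K j by [].
  have [e1 e2 e3 e4] := vtx_enc hj hp a2.
  have m1 : vtx K j p.+1 < nV K by rewrite /nV ltnS.
  case: (posnP p) => p0.
  + subst p. apply: connect1. rewrite /eG /= (inordK m1) /eN /=.
    by rewrite e2.
  + have hp' : 1 <= p by lia. have hl' : p < lenc K j by lia.
    have [g1 g2 g3 g4] := vtx_enc hj hp' hl'.
    have m0 : vtx K j p < nV K by rewrite /nV ltnS.
    apply: connect_trans (IH hp' hl') _. apply: connect1.
    have [_ _ E _] := EE hK hj hl'.
    rewrite /eG (inordK m0) (inordK m1).
    move: E. rewrite /nbv.
    have -> : ((p == 0) || (p == lenc K j)) = false by lia.
    have -> : ((p.+1 == 0) || (p.+1 == lenc K j)) = false by lia.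
    exact: id.
Qed.

Lemma connG (K : nat) : 2 <= K -> connected_graph (eG K).
Proof.
move=> hK x y. apply: (connect_trans (y := ord0)); last exact: conn_c.
rewrite (sym_connect_sym (@eG_sym K)). exact: conn_c.
Qed.

Theorem mainTheorem14 :
  forall N : nat, exists (n : nat) (e : rel 'I_n),
    N < n /\ simple_graph e /\ connected_graph e /\
    one_point_union_of_regular e /\ chi_la_eq e 2.
Proof.
move=> N. have hK : 2 <= N.+2 by [].
exists (nV N.+2), (eG N.+2). split; [|split; [|split; [|split]]].
- rewrite /nV /nn /Wd. nia.
- split; [exact: eG_sym | exact: eG_irr].
- exact: connG.
- exact: opu.
- split.
  + exists (fG N.+2). split; [exact: la_lab | exact: num2].
  + move=> f hf. exact: lower2.
Qed.
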